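(* Fix $k\in\mathbb{N}$ and let $\alpha=\alpha(n)\in(0,\infty)$. If $\alpha\to\infty$ and $\alpha/\sqrt{n}\to 0$ as $n\to\infty$, then $d_{TV}(M_{n,k}^{\alpha},M_{n,k}^{\infty})\to 1$ as $n\to\infty$.
   Context: A $k$-out map on $[n]$ is a map $M:[n]\to[n]^k$, viewed as a digraph on $[n]$ in which each vertex has $k$ out-arcs labeled $1,\dots,k$; $\mathcal{M}_{n,k}$ denotes the set of all such maps. The in-degree $d_j$ of vertex $j$ is the total number of coordinates, over all vertices $i$ and all $k$ labels, of $M(i)$ equal to $j$ (so $d_1+\dots+d_n=kn$). For $\alpha\in(0,\infty)$, the random $k$-out map $M_{n,k}^{\alpha}$ is generated by inserting $kn$ out-arcs, $k$ per vertex: every vertex starts with weight $\alpha$; at each step a vertex whose out-degree is below $k$ picks its next image $j$ with probability proportional to the current weight of $j$, and the weight of $j$ then increases by $1$. Its law is $P(M_{n,k}^{\alpha}=M)=\prod_{j=1}^n \alpha^{\overline{d_j}}/(\alpha n)^{\overline{kn}}$, where $(d_1,\dots,d_n)$ is the in-degree sequence of $M$ and $x^{\overline{y}}=x(x+1)\cdots(x+y-1)$. $M_{n,k}^{\infty}$ denotes the uniformly random element of $\mathcal{M}_{n,k}$ (probability $n^{-kn}$ each). $d_{TV}(M_{n,k}^{\alpha},M_{n,k}^{\infty})=\sup_{\mathcal{A}\subseteq\mathcal{M}_{n,k}}|P(M_{n,k}^{\alpha}\in\mathcal{A})-P(M_{n,k}^{\infty}\in\mathcal{A})|$. *)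

(* Defs.v *)
From HB Require Import structures.
From mathcomp Require Import all_boot all_order all_algebra.
From mathcomp Require Import all_classical all_reals all_analysis.
Set Implicit Arguments. Unset Strict Implicit. Unset Printing Implicit Defensive.
Import Order.TTheory GRing.Theory Num.Theory numFieldNormedType.Exports.
Local Open Scope ring_scope.

Definition kout_map (n k : nat) := {ffun 'I_n -> k.-tuple 'I_n}.

Definition indeg (n k : nat) (M : kout_map n k) (j : 'I_n) : nat :=
  #|[set p : 'I_n * 'I_k | tnth (M p.1) p.2 == j]|.

Definition rfact (R : numDomainType) (x : R) (m : nat) : R :=
  \prod_(i < m) (x + i%:R).

Definition P_alpha (R : realType) (n k : nat) (alpha : R) (M : kout_map n k) : R :=
  (\prod_(j : 'I_n) rfact alpha (indeg M j)) / rfact (alpha * n%:R) (k * n).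

Definition P_unif (R : realType) (n k : nat) (M : kout_map n k) : R :=
  (n%:R ^+ (k * n))^-1.

(* total variation distance between two (point-mass) laws on a finite type:
   sup over all subsets A of |P(A) - Q(A)| (a max, as there are finitely many A) *)
Definition dTV (R : realType) (T : finType) (p q : T -> R) : R :=
  \big[Num.max/0]_(A : {set T}) `| \sum_(x in A) p x - \sum_(x in A) q x |.

(* Main.v *)
Require Import Defs.
From HB Require Import structures.
From mathcomp Require Import all_boot all_order all_algebra.
From mathcomp Require Import all_classical all_reals all_analysis.
From mathcomp Require Import ring lra.
Import Order.TTheory GRing.Theory Num.Theory numFieldNormedType.Exports.
Local Open Scope ring_scope.
Set Implicit Arguments. Unset Strict Implicit. Unset Printing Implicit Defensive.


Section Step.
Variables (R : realType) (X : finType) (n : nat) (y0 : 'I_n) (b : R).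

Definition rf (c : nat) : R := \prod_(i < c) (1 + b * i%:R).
Definition cnt (A : {set X}) (f : {ffun X -> 'I_n}) (j : 'I_n) : nat :=
  \sum_(y in A) (f y == j).
Definition Den (a : nat) : R := \prod_(i < a) (n%:R + b * i%:R).
Definition W (A : {set X}) f := (\prod_j rf (cnt A f j)) / Den #|A|.
Definition Fam (A : {set X}) :=
  [set f : {ffun X -> 'I_n} | [forall x, (x \notin A) ==> (f x == y0)]].
Definition EA (A : {set X}) (G : ('I_n -> nat) -> R) :=
  \sum_(f in Fam A) W A f * G (cnt A f).
Definition upd (c : 'I_n -> nat) (j : 'I_n) := fun j' => (c j' + (j' == j))%N.
Definition setf (g : {ffun X -> 'I_n}) x j := [ffun y => if y == x then j else g y].

Lemma rfS c : rf c.+1 = rf c * (1 + b * c%:R).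
Proof. by rewrite /rf big_ord_recr. Qed.
Lemma DenS a : Den a.+1 = Den a * (n%:R + b * a%:R).
Proof. by rewrite /Den big_ord_recr. Qed.

Lemma cnt_set (A : {set X}) x (g : {ffun X -> 'I_n}) (j j' : 'I_n) : x \notin A ->
  cnt (x |: A) (setf g x j) j' = (cnt A g j' + (j' == j))%N.
Proof.
move=> xA; rewrite /cnt big_setU1 //= ffunE eqxx addnC.
rewrite (eq_bigr (fun y => nat_of_bool (g y == j'))); first by rewrite eq_sym.
move=> y yA; rewrite ffunE; case: (eqVneq y x) => [yx|_] //.
by move: xA; rewrite -yx yA.
Qed.

Lemma W_set (A : {set X}) x (g : {ffun X -> 'I_n}) (j : 'I_n) : x \notin A ->
  W (x |: A) (setf g x j) = W A g * ((1 + b * (cnt A g j)%:R) / (n%:R + b * #|A|%:R)).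
Proof.
move=> xA; rewrite /W cardsU1 xA add1n DenS.
rewrite (bigD1 j) //= [in RHS](bigD1 j) //= cnt_set // eqxx addn1 rfS.
rewrite (eq_bigr (fun j' => rf (cnt A g j'))); last first.
  by move=> j' /negbTE nj; rewrite cnt_set // nj addn0.
rewrite invfM; ring.
Qed.

Lemma step (A : {set X}) x G : x \notin A ->
  EA (x |: A) G = EA A (fun c => \sum_j ((1 + b * (c j)%:R) / (n%:R + b * #|A|%:R)) * G (upd c j)).
Proof.
move=> xA; rewrite /EA.
rewrite (partition_big (fun f : {ffun X -> 'I_n} => f x) xpredT) //=.
rewrite [RHS](eq_bigr (fun g => \sum_j W A g * ((1 + b * (cnt A g j)%:R) / (n%:R + b * #|A|%:R)) * G (upd (cnt A g) j))); last first.
  by move=> g _; rewrite mulr_sumr; apply: eq_bigr => j _; rewrite mulrA.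
rewrite exchange_big /=; apply: eq_bigr => j _.
rewrite (reindex_onto (fun g => setf g x j) (fun f => setf f x y0)); last first.
  move=> f /andP[_ /eqP fx]; apply/ffunP => y; rewrite !ffunE.
  by case: eqP => [->|]; rewrite ?fx.
apply: eq_big => g.
  have -> : setf g x j x == j by rewrite /setf ffunE eqxx.
  rewrite andbT !inE; apply/idP/idP.
    case/andP=> /forallP H /eqP E; apply/forallP => y; apply/implyP => yA.
    case: (eqVneq y x) => [->|ny].
      by rewrite -E /setf !ffunE eqxx.
    have := implyP (H y); rewrite !inE negb_or ny yA /setf ffunE (negbTE ny); apply => //.
  move/forallP => H; apply/andP; split.
    apply/forallP=> y; apply/implyP; rewrite !inE negb_or => /andP[ny yA].
    by rewrite /setf ffunE (negbTE ny); exact: (implyP (H y) yA).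
  apply/eqP/ffunP => y; rewrite /setf !ffunE; case: eqVneq => [->|//].
  exact/esym/eqP/(implyP (H x) xA).
move=> gF; rewrite W_set //; congr (_ * G _).
by apply: funext => j'; rewrite cnt_set.
Qed.
End Step.


Section Mom.
Variables (R : realType) (n : nat).
Implicit Types (c : 'I_n -> nat).

Definition Sv c : R := \sum_j (c j)%:R * ((c j)%:R - 1).
Definition Tv c : R := \sum_j (c j)%:R * ((c j)%:R - 1) * ((c j)%:R - 2).
Definition pw c (k : nat) : R := \sum_j (c j)%:R ^+ k.

Lemma psum c (u v w z : R) :
  \sum_j (u + v * (c j)%:R + w * (c j)%:R ^+ 2 + z * (c j)%:R ^+ 3) =
  u * n%:R + v * pw c 1 + w * pw c 2 + z * pw c 3.
Proof.
rewrite !big_split /= sumr_const card_ord -!mulr_sumr mulr_natr /pw.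
by rewrite (eq_bigr (fun j => (c j)%:R ^+ 1)) // => j _; rewrite expr1.
Qed.

Lemma Sv_pw c : Sv c = pw c 2 - pw c 1.
Proof.
rewrite /Sv /pw -sumrB; apply: eq_bigr => j _; ring.
Qed.

Lemma Tv_pw c : Tv c = pw c 3 - 3 * pw c 2 + 2 * pw c 1.
Proof.
rewrite /Tv /pw !mulr_sumr -sumrB -big_split /=; apply: eq_bigr => j _; ring.
Qed.

Lemma sum_upd c j (h : nat -> R) :
  \sum_j' h (upd c j j') = \sum_j' h (c j') + (h (c j).+1 - h (c j)).
Proof.
rewrite (bigD1 j) //= [in RHS](bigD1 j) //= /upd eqxx addn1.
rewrite (eq_bigr (fun j' => h (c j'))); last by move=> j' /negbTE ->; rewrite addn0.
ring.
Qed.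

Lemma Sv_upd c j : Sv (upd c j) = Sv c + 2 * (c j)%:R.
Proof.
rewrite /Sv (sum_upd c j (fun x => x%:R * (x%:R - 1))) -natr1; congr (_ + _); ring.
Qed.

Lemma Tv_upd c j : Tv (upd c j) = Tv c + 3 * ((c j)%:R * ((c j)%:R - 1)).
Proof.
rewrite /Tv (sum_upd c j (fun x => x%:R * (x%:R - 1) * (x%:R - 2))) -natr1; congr (_ + _); ring.
Qed.

Variables (b : R) (a : nat) (c : 'I_n -> nat).
Hypothesis (ca : (\sum_j c j)%N = a).
Let D := n%:R + b * a%:R.
Hypothesis (D0 : D != 0).
Let x j := (c j)%:R : R.

Lemma pw1 : pw c 1 = a%:R.
Proof.
rewrite /pw -ca natr_sum; apply: eq_bigr => j _; by rewrite expr1.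
Qed.

Lemma L1 : \sum_j ((1 + b * (c j)%:R) / D) * 1 = 1.
Proof.
rewrite (eq_bigr (fun j => D^-1 * (1 + b * x j + 0 * x j ^+ 2 + 0 * x j ^+ 3))); last first.
  by move=> j _; rewrite /x; ring.
rewrite -mulr_sumr psum pw1 /D; field; done.
Qed.

Lemma LS : \sum_j ((1 + b * (c j)%:R) / D) * Sv (upd c j) =
  (1 + 2 * b / D) * Sv c + 2 * (a%:R + b * a%:R) / D.
Proof.
rewrite (eq_bigr (fun j => D^-1 * (Sv c + (b * Sv c + 2) * x j + 2 * b * x j ^+ 2 + 0 * x j ^+ 3))); last first.
  by move=> j _; rewrite Sv_upd /x; ring.
rewrite -mulr_sumr psum !Sv_pw pw1 /D; field; done.
Qed.

Lemma LT : \sum_j ((1 + b * (c j)%:R) / D) * Tv (upd c j) =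
  (1 + 3 * b / D) * Tv c + 3 * (1 + 2 * b) / D * Sv c.
Proof.
rewrite (eq_bigr (fun j => D^-1 * (Tv c + (b * Tv c - 3) * x j + (3 - 3 * b) * x j ^+ 2 + 3 * b * x j ^+ 3))); last first.
  by move=> j _; rewrite Tv_upd /x; ring.
rewrite -mulr_sumr psum Tv_pw !Sv_pw pw1 /D; field; done.
Qed.

Lemma LS2 : \sum_j ((1 + b * (c j)%:R) / D) * Sv (upd c j) ^+ 2 =
  (1 + 4 * b / D) * Sv c ^+ 2 + 4 * (a%:R + b * a%:R) / D * Sv c
  + 4 * (Sv c + a%:R + b * (Tv c + 3 * Sv c + a%:R)) / D.
Proof.
rewrite (eq_bigr (fun j => D^-1 * (Sv c ^+ 2 + (b * Sv c ^+ 2 + 4 * Sv c) * x j + (4 * b * Sv c + 4) * x j ^+ 2 + 4 * b * x j ^+ 3))); last first.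
  by move=> j _; rewrite Sv_upd /x; ring.
rewrite -mulr_sumr psum Tv_pw !Sv_pw pw1 /D; field; done.
Qed.
End Mom.


Section Ind.
Variables (R : realType) (X : finType) (n : nat) (y0 : 'I_n) (b : R).
Hypothesis b0 : 0 <= b.
Let N : R := n%:R.
Definition p2 := (1 + b) / (N + b).
Definition p3 := (1 + b) * (1 + 2 * b) / ((N + b) * (N + 2 * b)).
Definition p22 := ((1 + b) * (1 + 2 * b) * (1 + 3 * b) + (N - 1) * (1 + b) ^+ 2)
   / ((N + b) * (N + 2 * b) * (N + 3 * b)).
Definition ESf (a : R) := a * (a - 1) * p2.
Definition ETf (a : R) := a * (a - 1) * (a - 2) * p3.
Definition ES2f (a : R) := 2 * a * (a - 1) * p2 + 4 * a * (a - 1) * (a - 2) * p3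
  + a * (a - 1) * (a - 2) * (a - 3) * p22.

Lemma N_gt0 : 0 < N.
Proof. by rewrite /N ltr0n; case: (n) y0 => [[]|]. Qed.

Lemma Dpos (t : R) : 0 <= t -> 0 < N + b * t.
Proof. move=> t0; have := N_gt0; have := mulr_ge0 b0 t0; lra. Qed.

Lemma sum_cnt (A : {set X}) (f : {ffun X -> 'I_n}) : (\sum_j cnt A f j)%N = #|A|.
Proof.
rewrite /cnt exchange_big /= -sum1_card; apply: eq_bigr => y _.
rewrite (bigD1 (f y)) //= eqxx big1 // => j /negbTE.
by rewrite eq_sym => ->.
Qed.

Lemma EA_ext (A : {set X}) G1 G2 :
  (forall c, (\sum_j c j)%N = #|A| -> G1 c = G2 c) -> EA y0 b A G1 = EA y0 b A G2.
Proof.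
by move=> H; apply: eq_bigr => f _; rewrite H // sum_cnt.
Qed.

Lemma EA_lin (A : {set X}) (u0 u1 u2 u3 : R) :
  EA y0 b A (fun c => u0 * 1 + u1 * Sv R c + u2 * Tv R c + u3 * Sv R c ^+ 2) =
  u0 * EA y0 b A (fun=> 1) + u1 * EA y0 b A (@Sv R n) + u2 * EA y0 b A (@Tv R n)
  + u3 * EA y0 b A (fun c => Sv R c ^+ 2).
Proof.
rewrite /EA !mulr_sumr -!big_split /=; apply: eq_bigr => f _; ring.
Qed.

Lemma EA0 G : EA y0 b (@finset.set0 X) G = G (fun=> 0%N).
Proof.
rewrite /EA.
have -> : Fam y0 (@finset.set0 X) = [set [ffun=> y0]].
  apply/setP => f; rewrite !inE; apply/forallP/eqP => [H|->].
    by apply/ffunP => x; rewrite ffunE; apply/eqP; by have := H x; rewrite inE.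
  by move=> x; rewrite ffunE eqxx implybT.
rewrite big_set1 /W cards0 /Den big_ord0 invr1 mulr1.
have E : cnt (@finset.set0 X) [ffun=> y0] = fun=> 0%N.
  by apply: funext => j; rewrite /cnt big_set0.
by rewrite E big1 ?mul1r // => j _; rewrite /rf big_ord0.
Qed.

Let nz2 : N + b != 0. Proof. by have := (@Dpos 1 ler01); rewrite mulr1 => /gt_eqF ->. Qed.
Let nz3 : N + 2 * b != 0.
Proof. have := (@Dpos 2%:R (ler0n _ 2)); rewrite mulrC => /gt_eqF ->; done. Qed.
Let nz4 : N + 3 * b != 0.
Proof. have := (@Dpos 3%:R (ler0n _ 3)); rewrite mulrC => /gt_eqF ->; done. Qed.

Lemma moments a (A : {set X}) : #|A| = a ->
  [/\ EA y0 b A (fun=> 1) = 1, EA y0 b A (@Sv R n) = ESf a%:R,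
      EA y0 b A (@Tv R n) = ETf a%:R & EA y0 b A (fun c => Sv R c ^+ 2) = ES2f a%:R].
Proof.
elim: a A => [|a IH] A cA.
  rewrite (cards0_eq cA) !EA0 /Sv /Tv /ESf /ETf /ES2f !big1 //; try by move=> *; rewrite mul0r ?mul0r.
  by split; ring.
have [x xA] : exists x, x \in A by apply/card_gt0P; rewrite cA.
have cA' : #|A :\ x| = a by move: cA; rewrite (cardsD1 x) xA add1n => -[].
have xA' : x \notin A :\ x by rewrite finset.setD11.
have [E1 ES ET ES2] := IH _ cA'.
have Dn : N + b * a%:R != 0 by rewrite gt_eqF // Dpos.
rewrite -(finset.setD1K xA) !step //.
rewrite cA' -natr1.
split.
- rewrite (@EA_ext _ _ (fun c => 1 * 1 + 0 * Sv R c + 0 * Tv R c + 0 * Sv R c ^+ 2)).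
    by rewrite EA_lin E1 ES ET ES2; ring.
  by move=> c ca; rewrite cA' in ca; rewrite (L1 ca) //; ring.
- rewrite (@EA_ext _ _ (fun c => (2 * (a%:R + b * a%:R) / (N + b * a%:R)) * 1 + (1 + 2 * b / (N + b * a%:R)) * Sv R c + 0 * Tv R c + 0 * Sv R c ^+ 2)).
    rewrite EA_lin E1 ES ET ES2 /ESf /p2; field.
    by rewrite Dn nz2.
  by move=> c ca; rewrite cA' in ca; rewrite (LS ca) //; ring.
- rewrite (@EA_ext _ _ (fun c => 0 * 1 + (3 * (1 + 2 * b) / (N + b * a%:R)) * Sv R c + (1 + 3 * b / (N + b * a%:R)) * Tv R c + 0 * Sv R c ^+ 2)).
    rewrite EA_lin E1 ES ET ES2 /ESf /ETf /p2 /p3; field.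
    by rewrite Dn nz2 nz3.
  by move=> c ca; rewrite cA' in ca; rewrite (LT ca) //; ring.
- rewrite (@EA_ext _ _ (fun c => (4 * (a%:R + b * a%:R)) / (N + b * a%:R) * 1 + (4 * (a%:R + b * a%:R) / (N + b * a%:R) + 4 * (1 + 3 * b) / (N + b * a%:R)) * Sv R c + (4 * b / (N + b * a%:R)) * Tv R c + (1 + 4 * b / (N + b * a%:R)) * Sv R c ^+ 2)).
    rewrite EA_lin E1 ES ET ES2 /ESf /ETf /ES2f /p2 /p3 /p22; field.
    by rewrite Dn nz2 nz3 nz4.
  by move=> c ca; rewrite cA' in ca; rewrite (LS2 ca) //; ring.
Qed.
End Ind.


Section Bridge.
Variables (R : realType) (n k : nat).

Definition phi (M : kout_map n k) : {ffun 'I_n * 'I_k -> 'I_n} :=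
  [ffun p => tnth (M p.1) p.2].
Definition psi (g : {ffun 'I_n * 'I_k -> 'I_n}) : kout_map n k :=
  [ffun i => [tuple g (i, l) | l < k]].

Lemma phiK : cancel phi psi.
Proof.
move=> M; apply/ffunP => i; rewrite ffunE; apply: eq_from_tnth => l.
by rewrite tnth_mktuple ffunE.
Qed.
Lemma psiK : cancel psi phi.
Proof. by move=> g; apply/ffunP => -[i l]; rewrite !ffunE tnth_mktuple. Qed.

Lemma sum_phi (F : {ffun 'I_n * 'I_k -> 'I_n} -> R) :
  \sum_(M : kout_map n k) F (phi M) = \sum_g F g.
Proof.
by rewrite [RHS](reindex phi) //; exists psi => x _; [exact: phiK|exact: psiK].
Qed.

Lemma indeg_cnt (M : kout_map n k) : indeg M = cnt [set: 'I_n * 'I_k] (phi M).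
Proof.
apply: funext => j; rewrite /indeg /cnt -sum1_card big_mkcond [RHS]big_mkcond /=.
by apply: eq_bigr => p _; rewrite !inE ffunE; case: eqP.
Qed.

Lemma sum_indeg (M : kout_map n k) : (\sum_j indeg M j)%N = (k * n)%N.
Proof. by rewrite indeg_cnt sum_cnt cardsT card_prod !card_ord mulnC. Qed.

Lemma rfact_rf (a : R) d : a != 0 -> rfact a d = a ^+ d * rf a^-1 d.
Proof.
move=> a0; rewrite /rfact /rf.
rewrite (eq_bigr (fun i : 'I_d => a * (1 + a^-1 * i%:R))); last by move=> i _; field.
by rewrite big_split /= prodr_const card_ord.
Qed.

Lemma rfact_Den (a : R) m : a != 0 -> rfact (a * n%:R) m = a ^+ m * Den n a^-1 m.
Proof.
move=> a0; rewrite /rfact /Den.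
rewrite (eq_bigr (fun i : 'I_m => a * (n%:R + a^-1 * i%:R))); last by move=> i _; field.
by rewrite big_split /= prodr_const card_ord.
Qed.

Lemma Palpha_W (a : R) M : 0 < a ->
  @P_alpha R n k a M = W a^-1 [set: 'I_n * 'I_k] (phi M).
Proof.
move=> a0; have an : a != 0 by rewrite gt_eqF.
rewrite /P_alpha /W rfact_Den //.
rewrite (eq_bigr (fun j => a ^+ indeg M j * rf a^-1 (indeg M j))); last by move=> j _; rewrite rfact_rf.
rewrite big_split /= prodrXr sum_indeg -indeg_cnt cardsT card_prod !card_ord mulnC.
rewrite invfM mulrACA divff ?mul1r // expf_neq0 //.
Qed.

Lemma Punif_W M : @P_unif R n k M = W 0 [set: 'I_n * 'I_k] (phi M).
Proof.
rewrite /P_unif /W big1; last first.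
  by move=> j _; rewrite /rf big1 // => i _; rewrite mul0r addr0.
rewrite /Den (eq_bigr (fun _ => n%:R)); last by move=> i _; rewrite mul0r addr0.
by rewrite prodr_const card_ord cardsT card_prod !card_ord mulnC mul1r.
Qed.
End Bridge.


Lemma ff2a (R : realType) (M : R) : 2 <= M -> 0 <= M * (M - 1). Proof. move=> h; nra. Qed.
Lemma ff2b (R : realType) (M : R) : 2 <= M -> M * (M - 1) <= M ^+ 2. Proof. move=> h; rewrite expr2; nra. Qed.
Lemma ff3a (R : realType) (M : R) : 2 <= M -> 0 <= M * (M - 1) * (M - 2).
Proof. move=> h; apply: mulr_ge0; [nra|lra]. Qed.
Lemma ff3b (R : realType) (M : R) : 2 <= M -> M * (M - 1) * (M - 2) <= M ^+ 3.
Proof. move=> h. have h1 := (@ff2b R M h); have h0 := (@ff2a R M h). rewrite exprS mulrC. apply: ler_pM; lra. Qed.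
Lemma ff4a (R : realType) (M : R) : 2 <= M -> 0 <= M * (M - 1) * (4 * M - 6).
Proof. move=> h; apply: mulr_ge0; [nra|lra]. Qed.
Lemma ff4b (R : realType) (M : R) : 2 <= M -> (M * (M - 1)) ^+ 2 <= M ^+ 4.
Proof. move=> h. have h1 := (@ff2b R M h); have h0 := (@ff2a R M h). rewrite (_ : 4 = 2 * 2)%N // exprM. by apply: ler_pM. Qed.

Section Bounds.
Variables (R : realType) (n : nat) (K b : R).
Local Notation N := (n%:R : R).
Hypotheses (N2 : 2 <= N) (K1 : 1 <= K) (b0 : 0 <= b) (b1 : b <= 1).
Local Notation m := (K * N).
Ltac hy := have := N2; have := K1; have := b0; have := b1; move=> ? ? ? ?.

Lemma frac_le (x y w z : R) : 0 < y -> 0 < z -> x * z <= w * y -> x / y <= w / z.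
Proof. by move=> y0 z0 H; rewrite ler_pdivrMr // mulrAC ler_pdivlMr. Qed.

Lemma Np : 0 < N. Proof. hy. lra. Qed.
Lemma m2 : 2 <= m. Proof. hy. nra. Qed.

Lemma p2_ge0 : 0 <= p2 n b.
Proof. hy. by rewrite /p2 divr_ge0 //; lra. Qed.
Lemma p2_le : p2 n b <= 2 / N.
Proof. hy. rewrite /p2 frac_le //; try lra; nra. Qed.
Lemma p3_ge0 : 0 <= p3 n b.
Proof. hy. rewrite /p3 divr_ge0 //; nra. Qed.
Lemma p3_le : p3 n b <= 6 / N ^+ 2.
Proof. hy. have Np := Np.
rewrite /p3 frac_le //; first by apply: mulr_gt0; lra.
  by apply: exprn_gt0.
have h1 : (1 + b) * (1 + 2 * b) <= 6 by nra.
have h2 : N ^+ 2 <= (N + b) * (N + 2 * b) by rewrite expr2; nra.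
have h3 : 0 <= (1 + b) * (1 + 2 * b) by nra.
have := ler_pM h3 (sqr_ge0 N) h1 h2; lra. Qed.
Lemma p22_ge0 : 0 <= p22 n b.
Proof. hy. rewrite /p22 divr_ge0 //; nra. Qed.
Lemma p22_diff : p22 n b - p2 n b ^+ 2 =
  2 * b ^+ 2 * (N - 1) * (1 + b) / ((N + b) ^+ 2 * (N + 2 * b) * (N + 3 * b)).
Proof. hy.
rewrite /p22 /p2; field.
have h1 : N + b != 0 by rewrite gt_eqF //; lra.
have h2 : N + 2 * b != 0 by rewrite gt_eqF //; lra.
have h3 : N + 3 * b != 0 by rewrite gt_eqF //; lra.
by rewrite h1 h2 h3.
Qed.
Lemma diff_le : p22 n b - p2 n b ^+ 2 <= 4 / N ^+ 3.
Proof. hy.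
have Np := Np.
have d1 : N ^+ 4 <= (N + b) ^+ 2 * (N + 2 * b) * (N + 3 * b).
  have e1 : N ^+ 2 <= (N + b) ^+ 2 by rewrite !expr2; nra.
  have e2 : N ^+ 2 <= (N + 2 * b) * (N + 3 * b) by rewrite expr2; nra.
  have := ler_pM (sqr_ge0 N) (sqr_ge0 N) e1 e2.
  by rewrite -exprD mulrA.
have n1 : 2 * b ^+ 2 * (N - 1) * (1 + b) <= 4 * N.
  have e1 : b ^+ 2 * (1 + b) <= 2 by rewrite expr2; nra.
  have e2 : 0 <= 2 * (N - 1) by lra.
  have -> : 2 * b ^+ 2 * (N - 1) * (1 + b) = (2 * (N - 1)) * (b ^+ 2 * (1 + b)) by ring.
  have := ler_wpM2l e2 e1; lra.
rewrite p22_diff frac_le //.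
- by apply: (lt_le_trans _ d1); apply: exprn_gt0.
- by apply: exprn_gt0.
have n0 : 0 <= 2 * b ^+ 2 * (N - 1) * (1 + b).
  apply: mulr_ge0; last lra; apply: mulr_ge0; last lra.
  by apply: mulr_ge0 => //; exact: sqr_ge0.
have := ler_pM n0 (exprn_ge0 3 (ltW Np)) n1 (lexx (N ^+ 3)).
have : 4 * N * N ^+ 3 = 4 * N ^+ 4 by rewrite (exprS _ 3) mulrA.
nra.
Qed.

Definition Cst := 4 * K ^+ 2 + 24 * K ^+ 3 + 4 * K ^+ 4.

Lemma var_bound : ES2f n b m - ESf n b m ^+ 2 <= Cst * N.
Proof. hy.
have -> : ES2f n b m - ESf n b m ^+ 2 =
  2 * (m * (m - 1) * p2 n b) + 4 * (m * (m - 1) * (m - 2) * p3 n b)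
  - m * (m - 1) * (4 * m - 6) * p22 n b + (m * (m - 1)) ^+ 2 * (p22 n b - p2 n b ^+ 2).
  by rewrite /ES2f /ESf; ring.
have mm := m2.
have B1 : m * (m - 1) * p2 n b <= m ^+ 2 * (2 / N).
  apply: ler_pM; [exact: ff2a|exact: p2_ge0|exact: ff2b|exact: p2_le].
have B2 : m * (m - 1) * (m - 2) * p3 n b <= m ^+ 3 * (6 / N ^+ 2).
  apply: ler_pM; [exact: ff3a|exact: p3_ge0|exact: ff3b|exact: p3_le].
have B3 : 0 <= m * (m - 1) * (4 * m - 6) * p22 n b.
  apply: mulr_ge0; [exact: ff4a|exact: p22_ge0].
have B4 : (m * (m - 1)) ^+ 2 * (p22 n b - p2 n b ^+ 2) <= m ^+ 4 * (4 / N ^+ 3).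
  apply: ler_pM; [exact: sqr_ge0| |exact: ff4b|exact: diff_le].
  rewrite p22_diff divr_ge0 //.
    apply: mulr_ge0; last lra; apply: mulr_ge0; last lra.
    by apply: mulr_ge0 => //; exact: sqr_ge0.
  apply: mulr_ge0; last lra; apply: mulr_ge0; last lra.
  by apply: exprn_ge0; lra.
have -> : Cst * N = 2 * (m ^+ 2 * (2 / N)) + 4 * (m ^+ 3 * (6 / N ^+ 2)) - 0 + m ^+ 4 * (4 / N ^+ 3).
  rewrite /Cst; field; rewrite gt_eqF //; lra.
lra.
Qed.

Lemma gap_bound : N * b / 16 <= (ESf n b m - ESf n 0 m) / 2.
Proof. hy.
have -> : ESf n b m - ESf n 0 m = m * (m - 1) * b * (N - 1) / (N * (N + b)).
  rewrite /ESf /p2; field.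
  have h1 : N + b != 0 by rewrite gt_eqF //; lra.
  by rewrite h1 gt_eqF //; lra.
have Np := Np.
have mm := m2.
rewrite ler_pdivlMr; last lra.
rewrite ler_pdivlMr; last by apply: mulr_gt0; lra.
have h : N * (N - 1) <= m * (m - 1).
  have : 0 <= (K - 1) * N by apply: mulr_ge0; lra.
  have : 0 <= (K * N - N) * (K * N + N - 1) by apply: mulr_ge0; nra.
  nra.
have h2 : N * (N + b) <= 2 * N ^+ 2 by rewrite expr2; nra.
have L1 : N * b / 16 * 2 * (N * (N + b)) <= N * b / 8 * (2 * N ^+ 2).
  have -> : N * b / 16 * 2 = N * b / 8 by field.
  apply: ler_wpM2l => //; apply: divr_ge0; [apply: mulr_ge0; lra|lra].
have L2 : N * (N - 1) * (b * (N - 1)) <= m * (m - 1) * b * (N - 1).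
  have hb : 0 <= b * (N - 1) by apply: mulr_ge0; lra.
  by have := ler_wpM2r hb h; rewrite !mulrA.
have L3 : 0 <= b * (N * ((3 * N - 2) * (N - 2))).
  apply: mulr_ge0 => //; apply: mulr_ge0; [lra|apply: mulr_ge0; lra].
have E : N * (N - 1) * (b * (N - 1)) - N * b / 8 * (2 * N ^+ 2) = b * (N * ((3 * N - 2) * (N - 2))) / 4.
  by rewrite expr2; field.
have : 0 <= b * (N * ((3 * N - 2) * (N - 2))) / 4 by apply: divr_ge0; lra.
rewrite -E; lra.
Qed.
End Bounds.


Section Cheb.
Variables (R : realType) (X : finType) (n : nat) (y0 : 'I_n) (b : R).
Hypothesis b0 : 0 <= b.

Lemma W_ge0 (A : {set X}) (f : {ffun X -> 'I_n}) : 0 <= W b A f.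
Proof.
have b0' := b0.
rewrite /W divr_ge0 //.
  apply: prodr_ge0 => j _; apply: prodr_ge0 => i _.
  by apply: addr_ge0 => //; apply: mulr_ge0.
apply: ltW; apply: prodr_gt0 => i _.
have := @N_gt0 R n y0; have := mulr_ge0 b0' (ler0n R i); lra.
Qed.

Lemma EAT G : EA y0 b [set: X] G = \sum_f W b [set: X] f * G (cnt [set: X] f).
Proof.
apply: eq_bigl => f; rewrite inE; apply/forallP => x; by rewrite inE.
Qed.

Lemma cheb (P : ('I_n -> nat) -> bool) (E d : R) : 0 < d ->
  (forall c, P c -> d ^+ 2 <= (Sv R c - E) ^+ 2) ->
  \sum_f W b [set: X] f * (P (cnt [set: X] f))%:R <=
  (EA y0 b [set: X] (fun c => Sv R c ^+ 2) - 2 * E * EA y0 b [set: X] (@Sv R n)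
   + E ^+ 2 * EA y0 b [set: X] (fun=> 1)) / d ^+ 2.
Proof.
move=> d0 HP.
have d2 : 0 < d ^+ 2 by apply: exprn_gt0.
have -> : (EA y0 b [set: X] (fun c => Sv R c ^+ 2) - 2 * E * EA y0 b [set: X] (@Sv R n)
   + E ^+ 2 * EA y0 b [set: X] (fun=> 1)) / d ^+ 2 =
   EA y0 b [set: X] (fun c => (E ^+ 2 / d ^+ 2) * 1 + (- 2 * E / d ^+ 2) * Sv R c
     + 0 * Tv R c + (1 / d ^+ 2) * Sv R c ^+ 2).
  by rewrite EA_lin; field; rewrite gt_eqF.
rewrite EAT; apply: ler_sum => f _; apply: ler_wpM2l; first exact: W_ge0.
have -> : E ^+ 2 / d ^+ 2 * 1 + - 2 * E / d ^+ 2 * Sv R (cnt [set: X] f) +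
    0 * Tv R (cnt [set: X] f) + 1 / d ^+ 2 * Sv R (cnt [set: X] f) ^+ 2
    = (Sv R (cnt [set: X] f) - E) ^+ 2 / d ^+ 2.
  by field; rewrite gt_eqF.
case: (boolP (P _)) => Pc /=.
  by rewrite ler_pdivlMr // mul1r; exact: HP.
by apply: divr_ge0 => //; exact: sqr_ge0.
Qed.
End Cheb.


Lemma sum_in_ind (R : realType) (T : finType) (A : {set T}) (F : T -> R) :
  \sum_(x in A) F x = \sum_x F x * (x \in A)%:R.
Proof.
by rewrite big_mkcond; apply: eq_bigr => x _; case: (x \in A); rewrite ?mulr1 ?mulr0.
Qed.

Section Final.
Variables (R : realType) (n k : nat) (y0 : 'I_n).
Let T := [set: 'I_n * 'I_k].

Lemma tot_W (b : R) : 0 <= b -> \sum_(g : {ffun 'I_n * 'I_k -> 'I_n}) W b T g = 1.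
Proof.
move=> b0; have [E1 _ _ _] := moments y0 b0 (erefl #|T|).
by rewrite EAT // in E1; rewrite -[RHS]E1; apply: eq_bigr => g _; rewrite mulr1.
Qed.

Lemma prob_le1 (b : R) (A : {set kout_map n k}) (F : kout_map n k -> R) :
  0 <= b -> (forall M, F M = W b T (phi M)) -> 0 <= \sum_(M in A) F M <= 1.
Proof.
move=> b0 HF; apply/andP; split.
  by apply: sumr_ge0 => M _; rewrite HF W_ge0.
rewrite -(tot_W b0) -(sum_phi (fun g : {ffun 'I_n * 'I_k -> 'I_n} => W b T g)).
rewrite [X in _ <= X](bigID (mem A)) /=.
rewrite (eq_bigr (fun M => W b T (phi M))); last by move=> M _; rewrite HF.
rewrite -[X in X <= _]addr0 lerD2l.
by apply: sumr_ge0 => M _; rewrite W_ge0.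
Qed.

Lemma dTV_le1 (a : R) : 0 < a ->
  dTV (@P_alpha R n k a) (@P_unif R n k) <= 1.
Proof.
move=> a0; rewrite /dTV; apply: bigmax_le => // A _.
have b0 : 0 <= a^-1 by rewrite invr_ge0 ltW.
have /andP[h1 h2] := prob_le1 A b0 (fun M => Palpha_W M a0).
have /andP[h3 h4] := prob_le1 A (lexx 0) (@Punif_W R n k).
rewrite ler_norml; apply/andP; split; lra.
Qed.

Lemma dTV_lower (a : R) : (2 <= n)%N -> (1 <= k)%N -> 1 <= a ->
  1 - 512 * Cst (k%:R : R) * a ^+ 2 / n%:R <= dTV (@P_alpha R n k a) (@P_unif R n k).
Proof.
move=> n2 k1 a1.
have a0 : 0 < a by lra.
set b := a^-1.
have b0 : 0 <= b by rewrite invr_ge0 ltW.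
have bp : 0 < b by rewrite invr_gt0.
have b1 : b <= 1 by rewrite invf_le1.
have N2 : 2 <= (n%:R : R) by rewrite (ler_nat R 2 n).
have K1 : 1 <= (k%:R : R) by rewrite (ler_nat R 1 k).
have cT : #|T| = (n * k)%N by rewrite cardsT card_prod !card_ord.
have mE : ((n * k)%N%:R : R) = k%:R * n%:R by rewrite natrM mulrC.
have [E1b ESb _ ES2b] := moments y0 b0 cT.
have [E10 ES0 _ ES20] := moments y0 (lexx (0:R)) cT.
rewrite mE in ESb ES2b ES0 ES20.
set m := (k%:R : R) * n%:R in ESb ES2b ES0 ES20.
set E1 := ESf n b m in ESb ES2b.
set E0 := ESf n 0 m in ES0 ES20.
have Hg := gap_bound N2 K1 b0 b1.
have Vb := var_bound N2 K1 b0 b1.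
have V0 := var_bound N2 K1 (lexx 0) ler01.
rewrite -/m -/E1 -/E0 in Hg Vb V0.
set d := (E1 - E0) / 2 in Hg.
have Np : 0 < (n%:R : R) by lra.
have dlow : 0 < n%:R * b / 16 by apply: divr_gt0 => //; apply: mulr_gt0.
have dp : 0 < d by exact: lt_le_trans dlow Hg.
set tau := (E1 + E0) / 2.
pose Aev := [set M : kout_map n k | tau <= Sv R (indeg M)].
have Pa : \sum_(M in Aev) @P_alpha R n k a M =
    1 - \sum_(g : {ffun 'I_n * 'I_k -> 'I_n}) W b T g * (Sv R (cnt T g) < tau)%R%:R.
  rewrite sum_in_ind (eq_bigr (fun M => (fun g : {ffun 'I_n * 'I_k -> 'I_n} => W b T g * (tau <= Sv R (cnt T g))%R%:R) (phi M))).
    rewrite (sum_phi (fun g : {ffun 'I_n * 'I_k -> 'I_n} => W b T g * (tau <= Sv R (cnt T g))%R%:R)) -[X in X - _](tot_W b0) -sumrB; apply: eq_bigr => g _.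
    by rewrite leNgt; case: (_ < _); rewrite /= ?mulr0 ?mulr1 ?subr0 ?subrr.
  by move=> M _; rewrite Palpha_W // inE indeg_cnt.
have Pu : \sum_(M in Aev) @P_unif R n k M =
    \sum_(g : {ffun 'I_n * 'I_k -> 'I_n}) W 0 T g * (tau <= Sv R (cnt T g))%R%:R.
  rewrite sum_in_ind -(sum_phi (fun g : {ffun 'I_n * 'I_k -> 'I_n} => W 0 T g * (tau <= Sv R (cnt T g))%R%:R)).
  by apply: eq_bigr => M _; rewrite Punif_W inE indeg_cnt.
have Cb := @cheb R ('I_n * 'I_k)%type n y0 b b0 (fun c => Sv R c < tau) E1 d dp.
have Cb' : \sum_(g : {ffun 'I_n * 'I_k -> 'I_n}) W b T g * (Sv R (cnt T g) < tau)%R%:R <= (ES2f n b m - E1 ^+ 2) / d ^+ 2.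
  have := Cb; rewrite -/T E1b ESb ES2b.
  have -> : ES2f n b m - 2 * E1 * E1 + E1 ^+ 2 * 1 = ES2f n b m - E1 ^+ 2 by ring.
  apply => c /= Hc.
  have h : d <= E1 - Sv R c by rewrite /d; rewrite /tau in Hc; lra.
  rewrite !expr2; nra.
have C0 := @cheb R ('I_n * 'I_k)%type n y0 0 (lexx 0) (fun c => tau <= Sv R c) E0 d dp.
have C0' : \sum_(g : {ffun 'I_n * 'I_k -> 'I_n}) W 0 T g * (tau <= Sv R (cnt T g))%R%:R <= (ES2f n 0 m - E0 ^+ 2) / d ^+ 2.
  have := C0; rewrite -/T E10 ES0 ES20.
  have -> : ES2f n 0 m - 2 * E0 * E0 + E0 ^+ 2 * 1 = ES2f n 0 m - E0 ^+ 2 by ring.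
  apply => c /= Hc.
  have h : d <= Sv R c - E0 by rewrite /d; rewrite /tau in Hc; lra.
  rewrite !expr2; nra.
have L : (ES2f n b m - E1 ^+ 2) / d ^+ 2 + (ES2f n 0 m - E0 ^+ 2) / d ^+ 2
         <= 512 * Cst (k%:R : R) * a ^+ 2 / n%:R.
  rewrite -mulrDl.
  have d2 : 0 < d ^+ 2 by apply: exprn_gt0.
  have e1 : (ES2f n b m - E1 ^+ 2 + (ES2f n 0 m - E0 ^+ 2)) / d ^+ 2 <= (2 * Cst (k%:R : R) * n%:R) / d ^+ 2.
    by rewrite ler_pM2r ?invr_gt0 //; lra.
  have C0p : 0 <= Cst (k%:R : R).
    by rewrite /Cst; apply: addr_ge0; [apply: addr_ge0|]; apply: mulr_ge0 => //; apply: exprn_ge0; lra.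
  have e2 : (2 * Cst (k%:R : R) * n%:R) / d ^+ 2 <= (2 * Cst (k%:R : R) * n%:R) / (n%:R * b / 16) ^+ 2.
    apply: ler_wpM2l; first by apply: mulr_ge0; [apply: mulr_ge0|]; lra.
    rewrite lef_pV2 ?posrE ?exprn_gt0 //.
    by apply: ler_pM => //; lra.
  have e3 : (2 * Cst (k%:R : R) * n%:R) / (n%:R * b / 16) ^+ 2 = 512 * Cst (k%:R : R) * a ^+ 2 / n%:R.
    rewrite /b; field; rewrite !gt_eqF //.
  lra.
apply: le_trans (le_bigmax _ _ Aev).
apply: le_trans (ler_norm _); rewrite Pa Pu; lra.
Qed.
End Final.

Unset Implicit Arguments.
Local Open Scope classical_set_scope.
Local Open Scope ring_scope.

Theorem theorem1 (R : realType) (k : nat) (alpha : nat -> R) :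
  (1 <= k)%N ->
  (forall n, 0 < alpha n) ->
  alpha n @[n --> \oo] --> +oo ->
  alpha n / Num.sqrt (n%:R) @[n --> \oo] --> 0 ->
  @dTV R (kout_map n k) (@P_alpha R n k (alpha n)) (@P_unif R n k)
    @[n --> \oo] --> (1 : R).
Proof.
move=> k1 apos Ha Hs.
have Ha1 := (cvgryPge _).1 Ha 1.
have Hs' := (cvgrPdist_le _ _).1 Hs.
set C := 512 * Cst (k%:R : R).
have K1 : 1 <= (k%:R : R) by rewrite (ler_nat R 1 k).
have Cp : 0 < C.
  rewrite /C /Cst; apply: mulr_gt0 => //.
  apply: ltr_wpDl; last by apply: mulr_gt0 => //; apply: exprn_gt0; lra.
  apply: addr_ge0; apply: mulr_ge0 => //; apply: exprn_ge0; lra.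
apply/cvgrPdist_le => e e0.
set dl := Num.min 1 (e / C).
have dl0 : 0 < dl by rewrite /dl lt_min ltr01 /= divr_gt0.
have dl1 : dl <= 1 by rewrite /dl ge_min lexx.
have dl2 : dl <= e / C by rewrite /dl ge_min lexx orbT.
near=> n.
have n2 : (2 <= n)%N by near: n; exact: nbhs_infty_ge.
have a1 : 1 <= alpha n by near: n; exact: Ha1.
have hs : `|0 - alpha n / Num.sqrt n%:R| <= dl by near: n; exact: Hs'.
have y0 : 'I_n := Ordinal n2.
have Hlow := dTV_lower y0 n2 k1 a1.
have Hup := dTV_le1 k y0 (apos n).
have sq : alpha n ^+ 2 / n%:R <= e / C.
  have -> : alpha n ^+ 2 / n%:R = (alpha n / Num.sqrt n%:R) ^+ 2.
    by rewrite expr_div_n sqr_sqrtr // ler0n.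
  rewrite sub0r normrN in hs.
  rewrite -real_normK ?num_real //.
  have : `|alpha n / Num.sqrt n%:R| ^+ 2 <= dl ^+ 2.
    by apply: ler_pM => //; exact: normr_ge0.
  have : dl ^+ 2 <= dl by rewrite expr2 ger_pMr.
  lra.
have : C * alpha n ^+ 2 / n%:R <= e.
  have := ler_wpM2l (ltW Cp) sq.
  by rewrite [C * (e / C)]mulrC divfK ?gt_eqF // mulrA.
rewrite ger0_norm; last lra.
rewrite /C in Hlow *; lra.
Unshelve. all: by end_near.
Qed.
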